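(* Let $X,Y$ be random variables on finite alphabets $\mathcal{X},\mathcal{Y}$ with $|\mathcal{X}|<|\mathcal{Y}|$ and joint pmf $P_{XY}$ whose marginals have all entries positive, and with $P_{X|Y}$ of full row rank. For $\epsilon\ge0$ define $g_{\epsilon}(X,Y)=\max\{I(U;Y): P_{U|Y},\ X-Y-U,\ \chi^2(P_{X|U=u}\|P_X)\le\epsilon^2\ \forall u\}$ and $f_{\epsilon}(X,Y)=\max\{I(U;Y): P_{U|Y},\ X-Y-U,\ \|P_{X|U=u}-P_X\|_1\le\epsilon\ \forall u\}$. Then $g_{\epsilon}(X,Y)\le f_{\epsilon}(X,Y)\le g_{\epsilon'}(X,Y)$, where $\epsilon'=\epsilon/\sqrt{\min_{x}P_X(x)}$.
   Context: $U$ ranges over random variables on finite alphabets, generated from $Y$ through a kernel $P_{U|Y}$ so that $P_{XYU}=P_{XY}P_{U|Y}$. $\chi^2(P\|Q)=\sum_x (P(x)-Q(x))^2/Q(x)$ and $\|\cdot\|_1$ is the $\ell_1$ norm. *)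

(* Defs.v *)
From HB Require Import structures.
From mathcomp Require Import all_boot all_order all_algebra.
From mathcomp Require Import classical_sets boolp reals exp.
Set Implicit Arguments. Unset Strict Implicit. Unset Printing Implicit Defensive.
Import Order.TTheory GRing.Theory Num.Theory.
Local Open Scope ring_scope.
Local Open Scope classical_set_scope.

Section Defs.
Variables (R : realType) (X Y : finType).

Definition is_pmf2 (P : X -> Y -> R) : Prop :=
  (forall x y, 0 <= P x y) /\ \sum_(x : X) \sum_(y : Y) P x y = 1.

Definition PX (P : X -> Y -> R) (x : X) : R := \sum_(y : Y) P x y.
Definition PY (P : X -> Y -> R) (y : Y) : R := \sum_(x : X) P x y.

Definition PXgY_mx (P : X -> Y -> R) : 'M[R]_(#|X|, #|Y|) :=
  \matrix_(i < #|X|, j < #|Y|) (P (enum_val i) (enum_val j) / PY P (enum_val j)).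

Definition is_kernel (U : finType) (K : Y -> U -> R) : Prop :=
  (forall y u, 0 <= K y u) /\ (forall y, \sum_(u : U) K y u = 1).

(* P_{XYU} = P_{XY} P_{U|Y} (Markov chain X - Y - U) *)
Definition PU (P : X -> Y -> R) (U : finType) (K : Y -> U -> R) (u : U) : R :=
  \sum_(y : Y) PY P y * K y u.

Definition PXgU (P : X -> Y -> R) (U : finType) (K : Y -> U -> R) (u : U)
  (x : X) : R := (\sum_(y : Y) P x y * K y u) / PU P K u.

(* I(U;Y) in nats, with 0 log 0 = 0 *)
Definition MI_UY (P : X -> Y -> R) (U : finType) (K : Y -> U -> R) : R :=
  \sum_(y : Y) \sum_(u : U)
    (let j := PY P y * K y u in
     if j == 0 then 0 else j * ln (j / (PY P y * PU P K u))).

Definition chi2 (p q : X -> R) : R := \sum_(x : X) (p x - q x) ^+ 2 / q x.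
Definition l1dist (p q : X -> R) : R := \sum_(x : X) `|p x - q x|.

(* g_eps : chi-square constraint; f_eps : l1 constraint.  The constraint is
   imposed for every u with P_U(u) > 0 (P_{X|U=u} is undefined otherwise). *)
Definition g_set (P : X -> Y -> R) (eps : R) : set R :=
  [set r | exists (U : finType) (K : Y -> U -> R), is_kernel K /\
     (forall u, 0 < PU P K u -> chi2 (PXgU P K u) (PX P) <= eps ^+ 2) /\
     r = MI_UY P K].

Definition f_set (P : X -> Y -> R) (eps : R) : set R :=
  [set r | exists (U : finType) (K : Y -> U -> R), is_kernel K /\
     (forall u, 0 < PU P K u -> l1dist (PXgU P K u) (PX P) <= eps) /\
     r = MI_UY P K].

Definition g_eps (P : X -> Y -> R) (eps : R) : R := sup (g_set P eps).
Definition f_eps (P : X -> Y -> R) (eps : R) : R := sup (f_set P eps).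

(* min_x P_X(x); the seed 1 is harmless since P_X(x) <= 1 for a pmf *)
Definition minPX (P : X -> Y -> R) : R := \big[Num.min/1]_(x : X) PX P x.

End Defs.

(* Main.v *)
Require Import Defs.
From HB Require Import structures.
From mathcomp Require Import all_boot all_order all_algebra.
From mathcomp Require Import classical_sets boolp reals exp.
From mathcomp Require Import ring lra.
Import Order.TTheory GRing.Theory Num.Theory.
Local Open Scope ring_scope.

Section Aux.
Variables (R : realType) (X Y : finType).

Lemma var_id (q t : X -> R) (m : R) :
  \sum_x q x * t x = m -> \sum_x q x = 1 ->
  \sum_x q x * (t x - m) ^+ 2 = \sum_x q x * t x ^+ 2 - m ^+ 2.
Proof.
move=> Hm Hq.
transitivity (\sum_x (q x * t x ^+ 2 - (2 * m) * (q x * t x) + m ^+ 2 * q x)).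
  by apply: eq_bigr => x _; ring.
rewrite big_split /= sumrB -!mulr_sumr Hm Hq; ring.
Qed.

Lemma L1 (p q : X -> R) (e : R) : (forall x, 0 < q x) -> \sum_x q x = 1 ->
  0 <= e -> chi2 p q <= e ^+ 2 -> l1dist p q <= e.
Proof.
move=> qp Hq e0 Hc.
set t := fun x => `|p x - q x| / q x.
have Hm : \sum_x q x * t x = l1dist p q.
  apply: eq_bigr => x _; rewrite /t mulrC -mulrA mulVf ?mulr1 //.
  by rewrite gt_eqF.
have Hs : \sum_x q x * t x ^+ 2 = chi2 p q.
  apply: eq_bigr => x _; rewrite /t.
  have := qp x => h.
  rewrite expr_div_n real_normK ?num_real //; field; by rewrite gt_eqF.
have := var_id _ _ _ Hm Hq; rewrite Hs => H.
have H0 : 0 <= \sum_x q x * (t x - l1dist p q) ^+ 2.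
  by apply: sumr_ge0 => x _; rewrite mulr_ge0 ?sqr_ge0 // ltW.
have l0 : 0 <= l1dist p q by apply: sumr_ge0 => x _.
rewrite H in H0; nra.
Qed.

Lemma L2 (p q : X -> R) (e mn : R) : (forall x, mn <= q x) -> 0 < mn ->
  l1dist p q <= e -> chi2 p q <= e ^+ 2 / mn.
Proof.
move=> hq mn0 Hl.
have qp x : 0 < q x by apply: lt_le_trans (hq x).
apply: (@le_trans _ _ (\sum_x (p x - q x) ^+ 2 / mn)).
  apply: ler_sum => x _; apply: ler_wpM2l; first exact: sqr_ge0.
  by rewrite lef_pV2 ?posrE.
rewrite -mulr_suml; apply: ler_wpM2r; first by rewrite invr_ge0 ltW.
have l0 : 0 <= l1dist p q by apply: sumr_ge0 => x _.
apply: (@le_trans _ _ (l1dist p q ^+ 2)); last by nra.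
rewrite expr2 {2}/l1dist mulr_sumr; apply: ler_sum => x _.
rewrite -real_normK ?num_real // expr2 mulrC; apply: ler_wpM2r => //.
rewrite /l1dist (bigD1 x) //= lerDl; exact: sumr_ge0.
Qed.

Definition Hbound (P : X -> Y -> R) := \sum_y PY P y * (- ln (PY P y)).

Lemma MI_le (P : X -> Y -> R) (U : finType) (K : Y -> U -> R) :
  is_kernel K -> (forall y, 0 < PY P y) -> MI_UY P K <= Hbound P.
Proof.
move=> [K0 K1] Py; rewrite /MI_UY /Hbound; apply: ler_sum => y _.
have -> : PY P y * - ln (PY P y) = \sum_u PY P y * K y u * - ln (PY P y).
  by rewrite -mulr_suml -mulr_sumr K1 mulr1.
apply: ler_sum => u _ /=.
have j0 : 0 <= PY P y * K y u by rewrite mulr_ge0 // ltW.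
case: eqP => [->|/eqP jn]; first by rewrite mul0r.
have jp : 0 < PY P y * K y u by rewrite lt_neqAle eq_sym jn.
have jU : PY P y * K y u <= PU P K u.
  rewrite /PU (bigD1 y) //= lerDl; apply: sumr_ge0 => z _.
  by rewrite mulr_ge0 // ltW.
have Up : 0 < PU P K u by apply: lt_le_trans jU.
apply: ler_wpM2l => //.
rewrite -lnV ?posrE //.
have Hp : 0 < PY P y * PU P K u by rewrite mulr_gt0.
rewrite ler_ln ?posrE ?divr_gt0 ?invr_gt0 //.
apply: (@le_trans _ _ (PU P K u / (PY P y * PU P K u))).
  by apply: ler_wpM2r => //; rewrite invr_ge0 ltW.
rewrite invfM mulrCA mulfV ?mulr1 //; by rewrite gt_eqF.
Qed.

End Aux.

Theorem corollary1 (R : realType) (X Y : finType) (P : X -> Y -> R) (eps : R) :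
  is_pmf2 P ->
  (#|X| < #|Y|)%N ->
  (forall x, 0 < PX P x) ->
  (forall y, 0 < PY P y) ->
  \rank (PXgY_mx P) = #|X| ->
  0 <= eps ->
  g_eps P eps <= f_eps P eps /\
  f_eps P eps <= g_eps P (eps / Num.sqrt (minPX P)).
Proof.
move=> [P0 P1] _ PXp PYp _ e0.
have SX : \sum_x PX P x = 1 by [].
have mn0 : 0 < minPX P.
  rewrite /minPX; apply: (big_ind (fun v => 0 < v)) => //.
  by move=> a b a0 b0; rewrite lt_min a0 b0.
have mnle x : minPX P <= PX P x.
  by rewrite /minPX (bigD1 x) //= ge_min lexx.
set K0 := fun (y : Y) (u : unit) => (1 : R).
have K0k : is_kernel K0.
  split=> // y; by rewrite /K0 sumr_const card_unit.
have PU1 u : PU P K0 u = 1.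
  rewrite /PU /K0 -{2}P1 exchange_big /=; apply: eq_bigr => y _; by rewrite mulr1.
have PXgU0 u x : PXgU P K0 u x = PX P x.
  rewrite /PXgU PU1 divr1; apply: eq_bigr => y _; by rewrite /K0 mulr1.
have chi0 u : chi2 (PXgU P K0 u) (PX P) = 0.
  rewrite /chi2 big1 // => x _; by rewrite PXgU0 subrr expr0n /= mul0r.
have l10 u : l1dist (PXgU P K0 u) (PX P) = 0.
  rewrite /l1dist big1 // => x _; by rewrite PXgU0 subrr normr0.
have gne e : exists r, g_set P e r.
  exists (MI_UY P K0); exists unit, K0; split=> //; split=> // u _.
  by rewrite chi0 sqr_ge0.
have fne e : 0 <= e -> exists r, f_set P e r.
  move=> e00; exists (MI_UY P K0); exists unit, K0; split=> //; split=> // u _.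
  by rewrite l10.
have gsup e : has_sup (g_set P e).
  split; first exact: gne.
  exists (Hbound R X Y P) => r [U [K [Kk [_ ->]]]]; exact: MI_le.
have fsup e : 0 <= e -> has_sup (f_set P e).
  move=> e00; split; first exact: fne.
  exists (Hbound R X Y P) => r [U [K [Kk [_ ->]]]]; exact: MI_le.
split.
  apply: sup_le; last exact: fsup.
    move=> r [U [K [Kk [Hc ->]]]]; exists (MI_UY P K); split => //.
    exists U, K; split=> //; split=> // u Hu.
    apply: L1 => //; exact: Hc.
  exact: gne.
apply: sup_le; last exact: gsup.
  move=> r [U [K [Kk [Hc ->]]]]; exists (MI_UY P K); split => //.
  exists U, K; split=> //; split=> // u Hu.
  rewrite expr_div_n sqr_sqrtr; last exact: ltW.
  apply: L2 => //; exact: Hc.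
exact: fne.
Qed.
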